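(* Let $C\in\mathbb{R}^{N\times N}$ be symmetric positive definite, let $\{1,\dots,N\}=\mathcal S\cup\mathcal S'$ be a partition into disjoint nonempty sets, and let $\Gamma\subset\mathbb{C}$ be a positively oriented simple closed contour with $\Gamma\subset\mathbb{C}\setminus(-\infty,0]$ whose interior contains the spectrum of $C$, and such that $\Gamma$ does not meet the spectra of $C$, $C_{\mathcal S}$, $C_{\mathcal S'}$. For $z\in\Gamma$ set $B(z):=zI-C_{\mathcal S}$, $D(z):=zI-C_{\mathcal S'}$, $H(z):=C_{\mathcal S\mathcal S'}D(z)^{-1}C_{\mathcal S'\mathcal S}$, \[ R_{\mathcal S}(z):=(zI-C_{\mathcal S})^{-1}-\big[(zI-C)^{-1}\big]_{\mathcal S},\qquad \Theta_\Gamma:=\sup_{z\in\Gamma}\|B(z)^{-1}H(z)\|. \] If $\Theta_\Gamma<1$, then for all $z\in\Gamma$, \[ \|R_{\mathcal S}(z)\|\le\frac{\|C_{\mathcal S\mathcal S'}\|^2}{1-\Theta_\Gamma}\,\|B(z)^{-1}\|^2\,\|D(z)^{-1}\|. \]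
   Context: $\|\cdot\|$ is the spectral norm (on complex matrices). $C_{\mathcal S}$, $C_{\mathcal S'}$ are principal submatrices of $C$ on $\mathcal S,\mathcal S'$; $C_{\mathcal S\mathcal S'}$ (resp. $C_{\mathcal S'\mathcal S}$) is the off-diagonal block with rows in $\mathcal S$ and columns in $\mathcal S'$ (resp. vice versa); $[M]_{\mathcal S}$ is the principal submatrix of $M$ on $\mathcal S$. *)

(* Defs.v *)
From HB Require Import structures.
From mathcomp Require Import all_boot all_order all_algebra.
From mathcomp Require Import all_classical all_reals all_analysis.
From mathcomp.real_closed Require Import complex.
Set Implicit Arguments. Unset Strict Implicit. Unset Printing Implicit Defensive.
Import Order.TTheory GRing.Theory Num.Theory.
Import numFieldNormedType.Exports.
Local Open Scope classical_set_scope.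
Local Open Scope ring_scope.

Section Defs.
Variable R : realType.

Definition cabs (z : R[i]) : R := Num.sqrt (complex.Re z ^+ 2 + complex.Im z ^+ 2).

Definition cvnorm n (x : 'cV[R[i]]_n) : R :=
  Num.sqrt (\sum_(k < n) cabs (x k 0) ^+ 2).

Definition specnorm m n (A : 'M[R[i]]_(m, n)) : R :=
  sup [set cvnorm (A *m x) | x in [set x : 'cV[R[i]]_n | cvnorm x = 1]].

Definition cmx m n (M : 'M[R]_(m, n)) : 'M[R[i]]_(m, n) :=
  map_mx (real_complex R) M.

(* block of M with rows in S and columns in T (indices in increasing order) *)
Definition blk N (S T : {set 'I_N}) (M : 'M[R]_N) : 'M[R]_(#|S|, #|T|) :=
  \matrix_(i < #|S|, j < #|T|) M (enum_val i) (enum_val j).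

Definition curve (gx gy : R -> R) (t : R) : R[i] := Complex (gx t) (gy t).

Definition curve_set (gx gy : R -> R) : set R[i] :=
  [set curve gx gy t | t in `[0, 1]%classic].

Definition simple_closed_curve (gx gy : R -> R) : Prop :=
  [/\ {within `[0, 1], continuous gx},
      {within `[0, 1], continuous gy},
      curve gx gy 0 = curve gx gy 1 &
      forall s t, 0 <= s < 1 -> 0 <= t < 1 ->
        curve gx gy s = curve gx gy t -> s = t].

(* the winding number of the curve around a (not on the curve) equals 1:
   a continuous argument of (curve t - a) increases by exactly 2 pi *)
Definition winding_one (gx gy : R -> R) (a : R[i]) : Prop :=
  exists theta : R -> R,
    [/\ {within `[0, 1], continuous theta},
        (forall t, 0 <= t <= 1 ->
           curve gx gy t - a =
           real_complex R (cabs (curve gx gy t - a)) * Complex (cos (theta t)) (sin (theta t))) &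
        theta 1 - theta 0 = 2 * pi].

End Defs.

(* Main.v *)
Require Import Defs.
From HB Require Import structures.
From mathcomp Require Import all_boot all_order all_algebra.
From mathcomp Require Import all_classical all_reals all_analysis.
From mathcomp.real_closed Require Import complex.
From mathcomp Require Import ring lra.
Import Order.TTheory GRing.Theory Num.Theory.
Local Open Scope ring_scope.
Set Implicit Arguments. Unset Strict Implicit.


Section Norms.
Variable R : realType.
Local Notation C := (R[i]).
Local Notation rc := (real_complex R).

Lemma cabsC (z : C) : `|z| = rc (cabs z).
Proof. by rewrite normc_def. Qed.

Lemma cabs_ge0 (z : C) : 0 <= cabs z.
Proof. exact: sqrtr_ge0. Qed.

Lemma cabsD (x y : C) : cabs (x + y) <= cabs x + cabs y.
Proof. by rewrite -lecR rmorphD /= -!cabsC ler_normD. Qed.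

Lemma cabsM (x y : C) : cabs (x * y) = cabs x * cabs y.
Proof. by apply: complexI; rewrite rmorphM /= -!cabsC normrM. Qed.

Lemma cabsN (x : C) : cabs (- x) = cabs x.
Proof. by apply: complexI; rewrite -!cabsC normrN. Qed.

Lemma cabs0 : cabs (0 : C) = 0.
Proof. by apply: complexI; rewrite -!cabsC normr0. Qed.

Lemma cabs_real (r : R) : cabs (rc r) = `|r|.
Proof. by rewrite /cabs /= expr0n /= addr0 sqrtr_sqr. Qed.

Lemma cabs_sum n (F : 'I_n -> C) : cabs (\sum_i F i) <= \sum_i cabs (F i).
Proof.
rewrite -lecR rmorph_sum /= -cabsC.
apply: le_trans (ler_norm_sum _ _ _) _.
by rewrite le_eqVlt; apply/orP; left; apply/eqP; apply: eq_bigr => i _; rewrite cabsC.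
Qed.

Lemma cabs_conj (z : C) : cabs (conjc z) = cabs z.
Proof. by case: z => a b; rewrite /cabs /= sqrrN. Qed.

Lemma conj_mul_self (z : C) : conjc z * z = rc (cabs z ^+ 2).
Proof.
case: z => a b; rewrite /cabs /= sqr_sqrtr ?addr_ge0 ?sqr_ge0 //.
rewrite /GRing.mul /= /real_complex_def; congr Complex; rewrite /=.
  by ring.
by ring.
Qed.

Lemma cauchy_schwarz n (a b : 'I_n -> R) :
  \sum_i a i * b i <= Num.sqrt (\sum_i a i ^+ 2) * Num.sqrt (\sum_i b i ^+ 2).
Proof.
set A := Num.sqrt _; set B := Num.sqrt _.
have sa : 0 <= \sum_i a i ^+ 2 by apply: sumr_ge0 => i _; exact: sqr_ge0.
have sb : 0 <= \sum_i b i ^+ 2 by apply: sumr_ge0 => i _; exact: sqr_ge0.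
have A0 : 0 <= A by exact: sqrtr_ge0.
have B0 : 0 <= B by exact: sqrtr_ge0.
have [/eqP|An0] := eqVneq A 0.
  rewrite sqrtr_eq0 => sa'.
  have az : forall i, a i = 0.
    move=> i; apply/eqP; rewrite -sqrf_eq0; apply/eqP.
    apply: (@psumr_eq0P _ _ xpredT (fun j => a j ^+ 2)) => //; first by move=> j _; exact: sqr_ge0.
    by apply/le_anti; rewrite sa sa'.
  by rewrite big1 ?mulr_ge0 // => i _; rewrite az mul0r.
have [/eqP|Bn0] := eqVneq B 0.
  rewrite sqrtr_eq0 => sb'.
  have bz : forall i, b i = 0.
    move=> i; apply/eqP; rewrite -sqrf_eq0; apply/eqP.
    apply: (@psumr_eq0P _ _ xpredT (fun j => b j ^+ 2)) => //; first by move=> j _; exact: sqr_ge0.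
    by apply/le_anti; rewrite sb sb'.
  by rewrite big1 ?mulr_ge0 // => i _; rewrite bz mulr0.
have AB : 0 < A * B by rewrite mulr_gt0 // lt_def ?An0 ?Bn0.
have key : 2 * (\sum_i a i * b i) * (A * B) <= 2 * (A * B) * (A * B).
  have -> : 2 * (A * B) * (A * B) = (\sum_i a i ^+ 2) * B ^+ 2 + (\sum_i b i ^+ 2) * A ^+ 2.
    have eA : A ^+ 2 = \sum_i a i ^+ 2 by rewrite sqr_sqrtr.
    have eB : B ^+ 2 = \sum_i b i ^+ 2 by rewrite sqr_sqrtr.
    by rewrite -eA -eB; ring.
  rewrite !big_distrr /= big_distrl /= !big_distrl /= -big_split /=.
  apply: ler_sum => i _.
  have := sqr_ge0 (a i * B - b i * A).
  move=> h; nra.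
rewrite ler_pM2r // in key.
by rewrite -(ler_pM2l (_ : 0 < 2)) //.
Qed.

End Norms.

Section Vec.
Variable R : realType.
Local Notation C := (R[i]).
Local Notation rc := (real_complex R).

Lemma sqrt_le (a b : R) : 0 <= b -> a <= b ^+ 2 -> Num.sqrt a <= b.
Proof.
move=> b0 ab; rewrite -(ger0_norm b0) -sqrtr_sqr ler_sqrt //; exact: sqr_ge0.
Qed.

Lemma cvnorm_ge0 n (x : 'cV[C]_n) : 0 <= cvnorm x.
Proof. exact: sqrtr_ge0. Qed.

Lemma cvnorm_sq n (x : 'cV[C]_n) : cvnorm x ^+ 2 = \sum_k cabs (x k 0) ^+ 2.
Proof. by rewrite sqr_sqrtr // sumr_ge0 // => i _; exact: sqr_ge0. Qed.

Lemma cvnormD n (x y : 'cV[C]_n) : cvnorm (x + y) <= cvnorm x + cvnorm y.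
Proof.
apply: sqrt_le; first by rewrite addr_ge0 ?cvnorm_ge0.
have cs := @cauchy_schwarz R n (fun k => cabs (x k 0)) (fun k => cabs (y k 0)).
rewrite -/(cvnorm x) -/(cvnorm y) in cs.
have -> : (cvnorm x + cvnorm y) ^+ 2 = cvnorm x ^+ 2 + 2 * (cvnorm x * cvnorm y) + cvnorm y ^+ 2 by ring.
rewrite !cvnorm_sq.
apply: (@le_trans _ _ (\sum_k (cabs (x k 0) + cabs (y k 0)) ^+ 2)).
  apply: ler_sum => k _; rewrite mxE.
  have h1 := cabsD (x k 0) (y k 0); have h2 := cabs_ge0 (x k 0 + y k 0).
  have h3 := cabs_ge0 (x k 0); have h4 := cabs_ge0 (y k 0). nra.
have -> : \sum_k (cabs (x k 0) + cabs (y k 0)) ^+ 2 =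
   \sum_k cabs (x k 0) ^+ 2 + 2 * (\sum_k cabs (x k 0) * cabs (y k 0)) + \sum_k cabs (y k 0) ^+ 2.
  rewrite big_distrr /= -!big_split /=; apply: eq_bigr => k _; ring.
by rewrite lerD2r lerD2l ler_pM2l.
Qed.

Lemma cvnormN n (x : 'cV[C]_n) : cvnorm (- x) = cvnorm x.
Proof. by rewrite /cvnorm; congr Num.sqrt; apply: eq_bigr => k _; rewrite mxE cabsN. Qed.

Lemma cvnormZ n (c : C) (x : 'cV[C]_n) : cvnorm (c *: x) = cabs c * cvnorm x.
Proof.
rewrite /cvnorm -(ger0_norm (cabs_ge0 c)) -sqrtr_sqr -sqrtrM ?sqr_ge0 //.
congr Num.sqrt; rewrite big_distrr /=; apply: eq_bigr => k _.
by rewrite mxE cabsM exprMn.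
Qed.

Lemma cvnorm0 n : cvnorm (0 : 'cV[C]_n) = 0.
Proof.
by rewrite /cvnorm big1 ?sqrtr0 // => k _; rewrite mxE cabs0 expr0n.
Qed.

Lemma cvnorm_entry n (x : 'cV[C]_n) k : cabs (x k 0) <= cvnorm x.
Proof.
rewrite /cvnorm -(ger0_norm (cabs_ge0 _)) -sqrtr_sqr ler_sqrt;
  last by rewrite sumr_ge0 // => i _; exact: sqr_ge0.
rewrite (bigD1 k) //= lerDl sumr_ge0 // => i _; exact: sqr_ge0.
Qed.

Definition mxK m n (A : 'M[C]_(m, n)) : R :=
  Num.sqrt (\sum_i (\sum_j cabs (A i j)) ^+ 2).

Lemma mxK_ge0 m n (A : 'M[C]_(m, n)) : 0 <= mxK A.
Proof. exact: sqrtr_ge0. Qed.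

Lemma cvnorm_bound m n (A : 'M[C]_(m, n)) x : cvnorm (A *m x) <= mxK A * cvnorm x.
Proof.
apply: sqrt_le; first by rewrite mulr_ge0 ?mxK_ge0 ?cvnorm_ge0.
rewrite exprMn /mxK sqr_sqrtr; last by rewrite sumr_ge0 // => i _; exact: sqr_ge0.
rewrite big_distrl /=; apply: ler_sum => i _.
rewrite -exprMn mxE.
have h : cabs (\sum_j A i j * x j 0) <= (\sum_j cabs (A i j)) * cvnorm x.
  apply: le_trans (cabs_sum _) _; rewrite big_distrl /=; apply: ler_sum => j _.
  by rewrite cabsM ler_wpM2l ?cabs_ge0 ?cvnorm_entry.
have h2 := cabs_ge0 (\sum_j A i j * x j 0). nra.
Qed.

End Vec.

Section Spec.
Variable R : realType.
Local Notation C := (R[i]).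
Local Notation rc := (real_complex R).

Lemma specnorm_ub m n (A : 'M[C]_(m, n)) x :
  cvnorm (A *m x) <= specnorm A * cvnorm x.
Proof.
have [X0|Xn0] := eqVneq (cvnorm x) 0.
  rewrite X0 mulr0; apply: le_trans (cvnorm_bound A x) _; by rewrite X0 mulr0.
have Xp : 0 < cvnorm x by rewrite lt_def Xn0 cvnorm_ge0.
set u := rc (cvnorm x)^-1 *: x.
have u1 : cvnorm u = 1.
  by rewrite /u cvnormZ cabs_real ger0_norm ?invr_ge0 ?cvnorm_ge0 // mulVf.
have hub : has_ubound [set cvnorm (A *m x) | x in [set x : 'cV[C]_n | cvnorm x = 1]]%classic.
  exists (mxK A) => y [v /= v1 <-].
  by apply: le_trans (cvnorm_bound A v) _; rewrite v1 mulr1.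
have : cvnorm (A *m u) <= specnorm A.
  by apply: ub_le_sup => //; exists u.
rewrite /u -scalemxAr cvnormZ cabs_real ger0_norm ?invr_ge0 ?cvnorm_ge0 //.
by rewrite mulrC ler_pdivrMr.
Qed.

Lemma specnorm_ge0 m n (A : 'M[C]_(m, n)) : 0 <= specnorm A.
Proof.
rewrite /specnorm.
set E := [set _ | _ in _]%classic.
have [->|/set0P [e [v /= v1 _]]] := eqVneq E set0%classic; first by rewrite sup0.
apply: le_trans (cvnorm_ge0 (A *m v)) _.
have := specnorm_ub A v; by rewrite v1 mulr1.
Qed.

Lemma specnorm_le m n (A : 'M[C]_(m, n)) (k : R) :
  0 <= k -> (forall x, cvnorm (A *m x) <= k * cvnorm x) -> specnorm A <= k.
Proof.
move=> k0 hk; rewrite /specnorm.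
set E := [set _ | _ in _]%classic.
have [->|/set0P ne] := eqVneq E set0%classic; first by rewrite sup0.
apply: ge_sup => // y [v /= v1 <-].
by have := hk v; rewrite v1 mulr1.
Qed.

Lemma specnormM m n p (A : 'M[C]_(m, n)) (B : 'M[C]_(n, p)) :
  specnorm (A *m B) <= specnorm A * specnorm B.
Proof.
apply: specnorm_le; first by rewrite mulr_ge0 ?specnorm_ge0.
move=> x; rewrite -mulmxA; apply: le_trans (specnorm_ub _ _) _.
by rewrite -mulrA ler_wpM2l ?specnorm_ge0 ?specnorm_ub.
Qed.

Lemma specnormD m n (A B : 'M[C]_(m, n)) :
  specnorm (A + B) <= specnorm A + specnorm B.
Proof.
apply: specnorm_le; first by rewrite addr_ge0 ?specnorm_ge0.
move=> x; rewrite mulmxDl; apply: le_trans (cvnormD _ _) _.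
by rewrite mulrDl lerD ?specnorm_ub.
Qed.

Lemma specnormB m n (A B : 'M[C]_(m, n)) :
  specnorm (A - B) <= specnorm A + specnorm B.
Proof.
apply: specnorm_le; first by rewrite addr_ge0 ?specnorm_ge0.
move=> x; rewrite mulmxBl; apply: le_trans (cvnormD _ _) _.
by rewrite cvnormN mulrDl lerD ?specnorm_ub.
Qed.

Lemma specnorm_tr m n (A : 'M[R]_(m, n)) :
  specnorm (cmx A)^T <= specnorm (cmx A).
Proof.
apply: specnorm_le; first exact: specnorm_ge0.
move=> x; set w := (cmx A)^T *m x; set v := cmx A *m w.
have ew : forall k, w k 0 = \sum_j rc (A j k) * x j 0.
  by move=> k; rewrite /w mxE; apply: eq_bigr => j _; rewrite !mxE.
have ev : forall j, conjc (v j 0) = \sum_k rc (A j k) * conjc (w k 0).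
  move=> j; rewrite /v mxE rmorph_sum; apply: eq_bigr => k _.
  by rewrite rmorphM /= !mxE conjc_real.
have id : rc (\sum_k cabs (w k 0) ^+ 2) = \sum_j x j 0 * conjc (v j 0).
  rewrite rmorph_sum /=.
  under eq_bigr do rewrite -conj_mul_self ew big_distrr /=.
  under [RHS]eq_bigr do rewrite ev big_distrr /=.
  rewrite exchange_big /=; apply: eq_bigr => k _; apply: eq_bigr => j _; rewrite -ew; ring.
have h1 : cvnorm w ^+ 2 <= cvnorm x * cvnorm v.
  rewrite cvnorm_sq -(ger0_norm (sumr_ge0 _ (fun k _ => sqr_ge0 (cabs (w k 0))))).
  rewrite -cabs_real id; apply: le_trans (cabs_sum _) _.
  under eq_bigr do rewrite cabsM cabs_conj.
  exact: cauchy_schwarz.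
have h2 : cvnorm v <= specnorm (cmx A) * cvnorm w by exact: specnorm_ub.
have W0 := cvnorm_ge0 w; have X0 := cvnorm_ge0 x; have S0 := specnorm_ge0 (cmx A).
have [We|Wn] := eqVneq (cvnorm w) 0; first by rewrite We mulr_ge0.
have Wp : 0 < cvnorm w by rewrite lt_def Wn W0.
have : cvnorm w ^+ 2 <= (specnorm (cmx A) * cvnorm x) * cvnorm w.
  apply: le_trans h1 _; nra.
by rewrite expr2 ler_pM2r.
Qed.

End Spec.

Section Block.
Variable R : realType.
Local Notation C := (R[i]).
Local Notation rc := (real_complex R).

Lemma noeig_unit n (g : 'M[C]_n) a : ~ eigenvalue g a -> (a%:M - g) \in unitmx.
Proof.
move=> h; have : ~~ eigenvalue g a by apply/negP.
rewrite /eigenvalue /eigenspace negbK kermx_eq0 => rf.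
by rewrite -opprB -row_free_unit /row_free mxrank_opp.
Qed.

Definition sub N (T1 T2 : {set 'I_N}) (M : 'M[C]_N) : 'M[C]_(#|T1|, #|T2|) :=
  \matrix_(i < #|T1|, j < #|T2|) M (enum_val i) (enum_val j).

Variables (N : nat) (S S' : {set 'I_N}).
Hypotheses (dis : [disjoint S & S']) (un : S :|: S' = [set: 'I_N]).

Lemma notS k : (k \notin S) = (k \in S').
Proof.
have : k \in S :|: S' by rewrite un finset.in_setT.
rewrite finset.in_setU; case kS: (k \in S) => /= h; last by rewrite h.
by rewrite (disjointFr dis kS).
Qed.

Lemma sub_mul (T1 T2 : {set 'I_N}) (A G : 'M[C]_N) :
  sub T1 T2 (A *m G) = sub T1 S A *m sub S T2 G + sub T1 S' A *m sub S' T2 G.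
Proof.
apply/matrixP => i j; rewrite !mxE (bigID (fun k => k \in S)) /=.
congr (_ + _).
  rewrite (big_enum_val (A := fun k => k \in S)) /=.
  by apply: eq_bigr => l _; rewrite !mxE.
rewrite (eq_bigl (fun k => k \in S')); last by move=> k; rewrite notS.
rewrite (big_enum_val (A := fun k => k \in S')) /=.
by apply: eq_bigr => l _; rewrite !mxE.
Qed.

Lemma sub_diag (T : {set 'I_N}) (z : C) (M : 'M[R]_N) :
  sub T T (z%:M - cmx M) = z%:M - cmx (blk T T M).
Proof.
apply/matrixP => i j; rewrite !mxE (inj_eq enum_val_inj).
by [].
Qed.

Lemma sub_off (T1 T2 : {set 'I_N}) (z : C) (M : 'M[R]_N) :
  [disjoint T1 & T2] -> sub T1 T2 (z%:M - cmx M) = - cmx (blk T1 T2 M).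
Proof.
move=> d; apply/matrixP => i j; rewrite !mxE.
have -> : (enum_val i == enum_val j) = false.
  apply/negbTE/eqP => e; have := enum_valP j; rewrite -e.
  by rewrite (disjointFr d (enum_valP i)).
by rewrite mulr0n sub0r.
Qed.

Lemma sub_one (T : {set 'I_N}) : sub T T 1%:M = 1%:M.
Proof. by apply/matrixP => i j; rewrite !mxE (inj_eq enum_val_inj). Qed.

Lemma sub_one_off (T1 T2 : {set 'I_N}) :
  [disjoint T1 & T2] -> sub T1 T2 1%:M = 0.
Proof.
move=> d; apply/matrixP => i j; rewrite !mxE.
have -> : (enum_val i == enum_val j) = false.
  apply/negbTE/eqP => e; have := enum_valP j; rewrite -e.
  by rewrite (disjointFr d (enum_valP i)).
by [].
Qed.

End Block.

Lemma theta_fin (R : realType) (a : R) (T : \bar R) :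
  (a%:E <= T)%E -> (T < 1)%E -> a <= fine T /\ fine T < 1.
Proof.
case: T => [r| |] /=.
- by rewrite lee_fin lte_fin.
- by move=> _; rewrite ltNge leey.
- by rewrite leeNy_eq.
Qed.

Lemma arith (R : realType) (y t th k b h c d c' : R) :
  0 <= y -> 0 <= t -> 0 <= b -> 0 <= c -> 0 <= d -> 0 <= c' -> 0 <= h ->
  y <= t * y + k -> t <= th -> th < 1 -> k <= b * h * b -> h <= c * d * c' -> c' <= c ->
  y <= c ^+ 2 / (1 - th) * b ^+ 2 * d.
Proof.
move=> y0 t0 b0 c0 d0 c'0 h0 hy tle th1 k1 k2 k3.
have s1 : y * (1 - th) <= y - t * y by nra.
have s2 : y - t * y <= k by lra.
have s3 : k <= b ^+ 2 * (c * d * c').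
  apply: le_trans k1 _; rewrite expr2.
  have bb : 0 <= b * b by exact: mulr_ge0.
  have := ler_wpM2l bb k2; nra.
have s4 : b ^+ 2 * (c * d * c') <= c ^+ 2 * b ^+ 2 * d.
  have cd : 0 <= b ^+ 2 * c * d by rewrite !mulr_ge0 ?sqr_ge0.
  have := ler_wpM2l cd k3; rewrite !expr2; nra.
have -> : c ^+ 2 / (1 - th) * b ^+ 2 * d = (c ^+ 2 * b ^+ 2 * d) / (1 - th) by ring.
rewrite ler_pdivlMr; last by rewrite subr_gt0.
by apply: le_trans s1 _; apply: le_trans s2 _; apply: le_trans s3 _.
Qed.

Unset Implicit Arguments.
Theorem lemma4 (R : realType) (N : nat) (C : 'M[R]_N) (S S' : {set 'I_N})
    (gx gy : R -> R) :
  C^T = C ->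
  (forall x : 'cV[R]_N, x != 0 -> 0 < (x^T *m C *m x) 0 0) ->
  [disjoint S & S'] -> S :|: S' = [set: 'I_N] -> S != finset.set0 -> S' != finset.set0 ->
  simple_closed_curve gx gy ->
  (forall t, 0 <= t <= 1 -> ~ (gy t = 0 /\ gx t <= 0)) ->
  (forall l : R[i], eigenvalue (cmx C) l -> winding_one gx gy l) ->
  (forall z, curve_set gx gy z ->
     [/\ ~ eigenvalue (cmx C) z,
         ~ eigenvalue (cmx (blk S S C)) z &
         ~ eigenvalue (cmx (blk S' S' C)) z]) ->
  let Binv := fun z : R[i] => invmx (z%:M - cmx (blk S S C)) in
  let Dinv := fun z : R[i] => invmx (z%:M - cmx (blk S' S' C)) in
  let H := fun z : R[i] => cmx (blk S S' C) *m Dinv z *m cmx (blk S' S C) in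
  let RS := fun z : R[i] =>
    Binv z - \matrix_(i < #|S|, j < #|S|) (invmx (z%:M - cmx C)) (enum_val i) (enum_val j) in
  let Theta := ereal_sup [set (specnorm (Binv z *m H z))%:E | z in curve_set gx gy]%classic in
  (Theta < 1)%E ->
  forall z, curve_set gx gy z ->
    specnorm (RS z) <=
      specnorm (cmx (blk S S' C)) ^+ 2 / (1 - fine Theta)
      * specnorm (Binv z) ^+ 2 * specnorm (Dinv z).
Proof.
move=> Csym _ dis un _ _ _ _ _ hcurve Binv Dinv H RS Theta Hth z zc.
have [nC nB nD] := hcurve z zc.
have uA := noeig_unit nC.
have uB := noeig_unit nB.
have uD := noeig_unit nD.
have dis' : [disjoint S' & S] by rewrite disjoint_sym.
set Bm := z%:M - cmx (blk S S C) in uB.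
set Dm := z%:M - cmx (blk S' S' C) in uD.
set Cs := cmx (blk S S' C).
set Cs' := cmx (blk S' S C).
set G := invmx (z%:M - cmx C).
have AG : (z%:M - cmx C) *m G = 1%:M by rewrite mulmxV.
set P := sub S S G.
set Q := sub S' S G.
have e1 : 1%:M = Bm *m P - Cs *m Q.
  have := congr1 (@sub R N S S) AG.
  by rewrite (sub_mul dis un) sub_one sub_diag (sub_off _ _ dis) mulNmx => <-.
have e2 : - (Cs' *m P) + Dm *m Q = 0.
  have := congr1 (@sub R N S' S) AG.
  by rewrite (sub_mul dis un) (sub_one_off R dis') (sub_off _ _ dis') sub_diag mulNmx.
have eQ : Q = Dinv z *m Cs' *m P.
  have h : Dm *m Q = Cs' *m P by apply: subr0_eq; rewrite addrC.
  by rewrite -mulmxA -h /Dinv mulKmx.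
set X := Binv z *m H z.
have eP : P = Binv z + X *m P.
  have e1' : 1%:M = Bm *m P - H z *m P by rewrite e1 eQ /H !mulmxA.
  have := congr1 (mulmx (Binv z)) e1'.
  rewrite mulmx1 mulmxBr /Binv mulKmx // -/(Binv z) mulmxA -/X => e.
  by rewrite {1}e subrK.
set Y := RS z.
have RSe : Y = Binv z - P by [].
have L : Binv z - P = - (X *m P) by rewrite {1}eP opprD addrA subrr add0r.
have eY : Y = X *m Y - X *m Binv z.
  by rewrite RSe mulmxBr addrAC subrr add0r L.
have hy : specnorm Y <= specnorm X * specnorm Y + specnorm (X *m Binv z).
  rewrite {1}eY; apply: le_trans (specnormB _ _) _.
  by rewrite lerD2r specnormM.
have hm : ((specnorm X)%:E <= Theta)%E by apply: ereal_sup_ubound; exists z.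
have [tle th1] := theta_fin hm Hth.
have k1 : specnorm (X *m Binv z) <= specnorm (Binv z) * specnorm (H z) * specnorm (Binv z).
  apply: le_trans (specnormM X (Binv z)) _; apply: ler_wpM2r; [exact: specnorm_ge0| exact: (specnormM (Binv z) (H z))].
have k2 : specnorm (H z) <= specnorm Cs * specnorm (Dinv z) * specnorm Cs'.
  rewrite /H; apply: le_trans (specnormM (Cs *m Dinv z) Cs') _; apply: ler_wpM2r; [exact: specnorm_ge0| exact: (specnormM Cs (Dinv z))].
have k3 : specnorm Cs' <= specnorm Cs.
  have -> : Cs' = Cs^T.
    by apply/matrixP => i j; rewrite !mxE -[in LHS]Csym mxE.
  exact: specnorm_tr.
have y0 := specnorm_ge0 Y; have t0 := specnorm_ge0 X.
have b0 := specnorm_ge0 (Binv z); have c0 := specnorm_ge0 Cs.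
have d0 := specnorm_ge0 (Dinv z); have c'0 := specnorm_ge0 Cs'.
have h0 := specnorm_ge0 (H z).
exact: (arith y0 t0 b0 c0 d0 c'0 h0 hy tle th1 k1 k2 k3).
Qed.
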